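(* Let $(L^+,L^-)$ be a pair of fully transverse prelaminations of $S^1$. Define $\bar L^\pm:=\{(a,a')\in S^1\times S^1: a\neq a',\ \exists (a_n,a_n')\in L^\pm \text{ converging to } (a,a')\}$. Then for any subsets $\hat L^+,\hat L^-$ with $L^\pm\subseteq\hat L^\pm\subseteq\bar L^\pm$, the pair $(\hat L^+,\hat L^-)$ is a pair of fully transverse prelaminations.
   Context: Pairs $\{a_1,a_2\},\{b_1,b_2\}$ of distinct points of $S^1$ cross if $a_1,a_2$ lie in different components of $S^1\setminus\{b_1,b_2\}$. A prelamination is a set of unordered pairs of distinct points of $S^1$ (leaves) no two of which cross; pairs in $\bar L^\pm$ are regarded as unordered. $(L^+,L^-)$ is fully transverse if $L^+\cap L^-=\emptyset$, the set of endpoints of leaves of $L^+\cup L^-$ is dense in $S^1$, and for any $\alpha,\beta\in L^+\cup L^-$ there is a sequence $\alpha=\alpha_1,\dots,\alpha_k=\beta$ of leaves of $L^+\cup L^-$ with $\alpha_i$ crossing $\alpha_{i+1}$. *)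

(* Defs.v *)
From HB Require Import structures.
From mathcomp Require Import all_boot all_order all_algebra.
From mathcomp Require Import all_classical all_reals all_analysis.
Set Implicit Arguments. Unset Strict Implicit. Unset Printing Implicit Defensive.
Import Order.TTheory GRing.Theory Num.Theory.
Import numFieldNormedType.Exports.
Local Open Scope classical_set_scope.
Local Open Scope ring_scope.

Notation plane R := (R * R)%type.

Section Lam.
Variable R : realType.
Local Notation pt := (plane R).
Definition circle : set pt := [set p | p.1 ^+ 2 + p.2 ^+ 2 = 1].

(* A set of unordered pairs of points is encoded as a swap-symmetric set of
   ordered pairs: the unordered pair {a,b} belongs to it iff (a,b) does. *)
Definition upairs (L : set (pt * pt)) : Prop :=
  forall a b, L (a, b) -> L (b, a).

Definition cross (al be : pt * pt) : Prop :=
  let C := circle `\` [set be.1; be.2] in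
  [/\ C al.1, C al.2 &
      connected_component C al.1 <> connected_component C al.2].

Definition prelamination (L : set (pt * pt)) : Prop :=
  [/\ upairs L,
      (forall a b, L (a, b) -> [/\ circle a, circle b & a <> b]) &
      (forall al be, L al -> L be -> ~ cross al be)].

Definition same_leaf (x y : pt * pt) : Prop := x = y \/ x = (y.2, y.1).

Definition endpoints (L : set (pt * pt)) : set pt :=
  [set p | exists q, L (p, q)].

Definition fully_transverse (Lp Lm : set (pt * pt)) : Prop :=
  [/\ Lp `&` Lm = set0,
      circle `<=` closure (endpoints (Lp `|` Lm)) &
      (forall al be, (Lp `|` Lm) al -> (Lp `|` Lm) be ->
        exists (k : nat) (f : nat -> pt * pt),
          [/\ same_leaf (f 0%N) al, same_leaf (f k) be,
              (forall i, (i <= k)%N -> (Lp `|` Lm) (f i)) &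
              (forall i, (i < k)%N -> cross (f i) (f i.+1))])].

Definition Lbar (L : set (pt * pt)) : set (pt * pt) :=
  [set x | [/\ circle x.1, circle x.2, x.1 <> x.2 &
     exists u : nat -> pt * pt, (forall n, L (u n)) /\ u @ \oo --> x]].

End Lam.

(* Main.v *)
Require Import Defs.
From HB Require Import structures.
From mathcomp Require Import all_boot all_order all_algebra.
From mathcomp Require Import all_classical all_reals all_analysis.
From mathcomp Require Import ring lra.
Set Implicit Arguments. Unset Strict Implicit. Unset Printing Implicit Defensive.
Import Order.TTheory GRing.Theory Num.Theory.
Import numFieldNormedType.Exports.
Local Open Scope classical_set_scope.
Local Open Scope ring_scope.

Section Aux.
Variable R : realType.
Local Notation pt := (plane R).

Definition sd (b1 b2 p : pt) : R :=
  (b2.1 - b1.1) * (p.2 - b1.2) - (b2.2 - b1.2) * (p.1 - b1.1).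
Definition crsv (al be : pt * pt) : R := sd be.1 be.2 al.1 * sd be.1 be.2 al.2.
Definition chord (x : pt * pt) : Prop := [/\ circle x.1, circle x.2 & x.1 <> x.2].

Lemma sd_swap b1 b2 p : sd b2 b1 p = - sd b1 b2 p.
Proof. rewrite /sd; ring. Qed.
Lemma sd_b1 b1 b2 : sd b1 b2 b1 = 0.
Proof. rewrite /sd; ring. Qed.
Lemma sd_b2 b1 b2 : sd b1 b2 b2 = 0.
Proof. rewrite /sd; ring. Qed.

Lemma norm_pos (x1 y1 x2 y2 : R) : (x1, y1) <> (x2, y2) ->
  0 < (x2 - x1)^+2 + (y2 - y1)^+2.
Proof.
move=> ne; rewrite lt_neqAle addr_ge0 ?sqr_ge0 // andbT.
apply/negP => /eqP /esym /eqP; rewrite paddr_eq0 ?sqr_ge0 // !sqrf_eq0 !subr_eq0.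
by case/andP => /eqP e1 /eqP e2; apply: ne; rewrite e1 e2.
Qed.

Lemma line_param (x1 y1 x2 y2 u v : R) :
  0 < (x2-x1)^+2 + (y2-y1)^+2 ->
  (x2 - x1) * (v - y1) - (y2 - y1) * (u - x1) = 0 ->
  exists t, u = x1 + t * (x2 - x1) /\ v = y1 + t * (y2 - y1).
Proof.
move=> r0 h.
exists (((u-x1)*(x2-x1)+(v-y1)*(y2-y1))/((x2-x1)^+2 + (y2-y1)^+2)).
have rn : (x2-x1)^+2 + (y2-y1)^+2 != 0 by rewrite gt_eqF.
split.
- have e: (u - x1) * ((x2-x1)^+2 + (y2-y1)^+2) = ((u-x1)*(x2-x1)+(v-y1)*(y2-y1)) * (x2 - x1).
    have: (u - x1) * ((x2-x1)^+2 + (y2-y1)^+2) - ((u-x1)*(x2-x1)+(v-y1)*(y2-y1)) * (x2 - x1) = - (y2-y1) * ((x2 - x1) * (v - y1) - (y2 - y1) * (u - x1)) by ring.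
    by rewrite h mulr0 => /eqP; rewrite subr_eq0 => /eqP.
  rewrite mulrAC -e mulfK //; ring.
- have e: (v - y1) * ((x2-x1)^+2 + (y2-y1)^+2) = ((u-x1)*(x2-x1)+(v-y1)*(y2-y1)) * (y2 - y1).
    have: (v - y1) * ((x2-x1)^+2 + (y2-y1)^+2) - ((u-x1)*(x2-x1)+(v-y1)*(y2-y1)) * (y2 - y1) = (x2-x1) * ((x2 - x1) * (v - y1) - (y2 - y1) * (u - x1)) by ring.
    by rewrite h mulr0 => /eqP; rewrite subr_eq0 => /eqP.
  rewrite mulrAC -e mulfK //; ring.
Qed.

Lemma circ_line (x1 y1 x2 y2 t : R) :
  x1^+2 + y1^+2 = 1 -> x2^+2 + y2^+2 = 1 ->
  (x1 + t * (x2 - x1))^+2 + (y1 + t * (y2 - y1))^+2 =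
  1 + ((x2-x1)^+2 + (y2-y1)^+2) * (t^+2 - t).
Proof.
move=> h1 h2.
have -> : (x1 + t * (x2 - x1))^+2 + (y1 + t * (y2 - y1))^+2 =
  (1 - t) * (x1^+2 + y1^+2) + t * (x2^+2 + y2^+2) + ((x2-x1)^+2 + (y2-y1)^+2) * (t^+2 - t) by ring.
rewrite h1 h2; ring.
Qed.

Lemma sd_zero (b1 b2 p : pt) : chord (b1, b2) -> circle p -> sd b1 b2 p = 0 ->
  p = b1 \/ p = b2.
Proof.
case: b1 b2 p => [x1 y1] [x2 y2] [u v] [/= h1 h2 ne] hp.
rewrite /sd /= => hs.
have r0 := norm_pos ne.
have [t [eu ev]] := line_param r0 hs.
move: hp; rewrite /circle /= eu ev circ_line // => hp.
have : ((x2 - x1) ^+ 2 + (y2 - y1) ^+ 2) * (t ^+ 2 - t) = 0 by lra.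
move/eqP; rewrite mulf_eq0 gt_eqF //= => /eqP ht.
have : t * (t - 1) = 0 by rewrite -ht; ring.
move/eqP; rewrite mulf_eq0 subr_eq0 => /orP [] /eqP ->.
- by left; rewrite !mul0r !addr0.
- by right; congr pair; ring.
Qed.


Lemma inter (a1 a2 b1 b2 : pt) : circle a1 -> circle a2 -> chord (b1, b2) ->
  sd b1 b2 a1 * sd b1 b2 a2 < 0 ->
  exists l t, [/\ 0 < l < 1, 0 < t < 1,
    (1 - l) * a1.1 + l * a2.1 = (1 - t) * b1.1 + t * b2.1 &
    (1 - l) * a1.2 + l * a2.2 = (1 - t) * b1.2 + t * b2.2].
Proof.
case: a1 a2 b1 b2 => [u1 v1] [u2 v2] [x1 y1] [x2 y2].
rewrite /circle /= => ha1 ha2 [/= h1 h2 ne].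
set s1 := sd _ _ _; set s2 := sd _ _ _ => hs.
have dn : s1 - s2 != 0.
  apply/negP; rewrite subr_eq0 => /eqP e; move: hs; rewrite e.
  by rewrite -expr2 ltNge sqr_ge0.
set l := s1 / (s1 - s2).
have hl : l * (s1 - s2) = s1 by rewrite /l divfK.
have hl2 : l * (s1 - s2)^+2 = s1 * (s1 - s2) by rewrite expr2 mulrA hl.
have d2 : 0 < (s1 - s2)^+2 by rewrite exprn_even_gt0.
have l0 : 0 < l by nra.
have l1 : l < 1 by nra.
set P1 := (1 - l) * u1 + l * u2; set P2 := (1 - l) * v1 + l * v2.
have sP : (x2 - x1) * (P2 - y1) - (y2 - y1) * (P1 - x1) = 0.
  have -> : (x2 - x1) * (P2 - y1) - (y2 - y1) * (P1 - x1) = s1 - l * (s1 - s2)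
    by rewrite /P1 /P2 /s1 /s2 /sd /=; ring.
  by rewrite hl subrr.
have r0 := norm_pos ne.
have [t [e1 e2]] := line_param r0 sP.
have ane : (u1, v1) <> (u2, v2).
  move=> [eu ev]; move: hs; rewrite /s1 /s2 eu ev.
  by rewrite ltNge -expr2 sqr_ge0.
have a0 := norm_pos ane.
have nP : P1^+2 + P2^+2 = 1 - l * (1 - l) * ((u2 - u1)^+2 + (v2 - v1)^+2).
  have -> : P1^+2 + P2^+2 = (1 - l) * (u1^+2 + v1^+2) + l * (u2^+2 + v2^+2)
     - l * (1 - l) * ((u2 - u1)^+2 + (v2 - v1)^+2) by rewrite /P1 /P2; ring.
  rewrite ha1 ha2; ring.
have nP' := circ_line t h1 h2.
rewrite -e1 -e2 nP /= in nP'.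
have lt0 : ((x2 - x1) ^+ 2 + (y2 - y1) ^+ 2) * (t ^+ 2 - t) < 0.
  have : 0 < l * (1 - l) * ((u2 - u1)^+2 + (v2 - v1)^+2).
    by rewrite mulr_gt0 // mulr_gt0 // subr_gt0.
  rewrite /= in nP'; lra.
move: lt0; rewrite pmulr_rlt0 // => lt0.
exists l, t; split.
- by rewrite l0 l1.
- apply/andP; split; nra.
- by rewrite -/P1 e1; ring.
- by rewrite -/P2 e2; ring.
Qed.

Lemma sd_aff (x1 x2 p q : pt) (l : R) :
  (1 - l) * sd x1 x2 p + l * sd x1 x2 q =
  sd x1 x2 ((1 - l) * p.1 + l * q.1, (1 - l) * p.2 + l * q.2).
Proof. rewrite /sd /=; ring. Qed.

Lemma crs_sym (a1 a2 b1 b2 : pt) : chord (a1, a2) -> chord (b1, b2) ->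
  sd b1 b2 a1 * sd b1 b2 a2 < 0 -> sd a1 a2 b1 * sd a1 a2 b2 < 0.
Proof.
move=> ca cb hs.
have [ca1 ca2 ane] := ca; have [cb1 cb2 bne] := cb.
have [l [t [/andP [l0 l1] /andP [t0 t1] e1 e2]]] := inter ca1 ca2 cb hs.
have E := sd_aff a1 a2 a1 a2 l.
have E' := sd_aff a1 a2 b1 b2 t.
rewrite e1 e2 -E' sd_b1 sd_b2 !mulr0 addr0 in E.
set z1 := sd a1 a2 b1 in E *; set z2 := sd a1 a2 b2 in E *.
have H : t * (z1 * z2) = - ((1 - t) * z1 ^+ 2).
  have h : z1 * ((1 - t) * z1 + t * z2) = 0 by rewrite -E mulr0.
  by rewrite -[LHS]subr0 -h; ring.
have le : z1 * z2 <= 0.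
  rewrite -(pmulr_rle0 _ t0) H oppr_le0 mulr_ge0 ?sqr_ge0 //.
  by rewrite subr_ge0 ltW.
rewrite lt_neqAle le andbT.
apply/negP => /eqP; move/eqP; rewrite mulf_eq0 => hz.
have [z10 z20] : z1 = 0 /\ z2 = 0.
  have t1' : 1 - t != 0 by rewrite subr_eq0 eq_sym lt_eqF.
  case/orP: hz => /eqP hz; rewrite hz in E *; split => //.
  - by move/esym/eqP: E; rewrite mulr0 add0r mulf_eq0 gt_eqF //= => /eqP.
  - by move/esym/eqP: E; rewrite mulr0 addr0 mulf_eq0 (negPf t1') /= => /eqP.
rewrite /= in cb1 cb2 bne.
have := sd_zero ca cb1 z10; have := sd_zero ca cb2 z20; rewrite /=.
case=> e2' [] e1'; rewrite e1' e2' in bne hs => //; move: hs;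
  by rewrite ?sd_b1 ?sd_b2 ?mulr0 ?mul0r ltxx.
Qed.


Lemma cvg1 {T U V : topologicalType} {F : set_system T} {FF : Filter F}
  (h : T -> U * V) (p : U * V) : h @ F --> p -> (fun t => (h t).1) @ F --> p.1.
Proof. move=> H; apply: (cvg_comp h fst H); exact: cvg_fst. Qed.
Lemma cvg2 {T U V : topologicalType} {F : set_system T} {FF : Filter F}
  (h : T -> U * V) (p : U * V) : h @ F --> p -> (fun t => (h t).2) @ F --> p.2.
Proof. move=> H; apply: (cvg_comp h snd H); exact: cvg_snd. Qed.

Lemma cvg_sd {T : topologicalType} {F : set_system T} {FF : Filter F}
  (h1 h2 h3 : T -> pt) b1 b2 p :
  h1 @ F --> b1 -> h2 @ F --> b2 -> h3 @ F --> p ->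
  (fun t => sd (h1 t) (h2 t) (h3 t)) @ F --> sd b1 b2 p.
Proof.
move=> c1 c2 c3; rewrite /sd.
by apply: cvgB; apply: cvgM; apply: cvgB;
  (apply: cvg1 || apply: cvg2); assumption.
Qed.

Lemma sd_cont b1 b2 : continuous (sd b1 b2).
Proof. by move=> p; apply: cvg_sd; [exact: cvg_cst|exact: cvg_cst|exact: cvg_id]. Qed.

Lemma cvg_crsv {T : topologicalType} {F : set_system T} {FF : Filter F}
  (h k : T -> pt * pt) al be :
  h @ F --> al -> k @ F --> be ->
  (fun t => crsv (h t) (k t)) @ F --> crsv al be.
Proof.
move=> ch ck; rewrite /crsv.
by apply: cvgM; apply: cvg_sd; (apply: cvg1 || apply: cvg2); assumption.
Qed.

Lemma conn_sign (f : pt -> R) (K : set pt) x y : continuous f -> connected K ->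
  (forall z, K z -> f z != 0) -> K x -> K y -> 0 < f x -> 0 < f y.
Proof.
move=> fc cK nz Kx Ky fx.
have : K `&` [set z | 0 < f z] = K.
  apply: cK.
  - by exists x.
  - exists [set z | 0 < f z] => //.
    have := @open_comp _ _ f [set x : R | x > 0] (fun z _ => fc z).
    by move=> H; apply: H; exact: open_gt.
  - exists (~` [set z | f z < 0]).
      apply/open_closedC.
      have := @open_comp _ _ f [set x : R | x < 0] (fun z _ => fc z).
      by move=> H; apply: H; exact: open_lt.
    apply/seteqP; split => z [Kz hz]; split => //=.
    + by move=> hz'; move: (lt_trans hz' hz); rewrite ltxx.
    + have := nz _ Kz; rewrite neq_lt => /orP [] // h; by exfalso; apply: hz.
by move=> e; rewrite -e in Ky; case: Ky.
Qed.


Definition garc (w1 w2 r s t : R) : pt :=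
  ((t * (- w2) + s * Num.sqrt (r - t * t) * w1) / r,
   (t * w1 + s * Num.sqrt (r - t * t) * w2) / r).

Lemma cvg_pairR {T : Type} {F : set_system T} {FF : Filter F} (f g : T -> R) (a b : R) :
  f @ F --> a -> g @ F --> b -> (fun t => (f t, g t)) @ F --> (a, b).
Proof. by move=> fa gb; apply: (@cvg_pair _ _ _ _ (nbhs a) (nbhs b)). Qed.

Lemma garc_cont w1 w2 r s : continuous (garc w1 w2 r s).
Proof.
move=> t; rewrite /garc.
have hs : (fun t => Num.sqrt (r - t * t)) @ t --> Num.sqrt (r - t * t).
  have h1 : (fun t => r - t * t) @ t --> r - t * t.
    by apply: cvgB; [exact: cvg_cst | apply: cvgM; exact: cvg_id].
  exact: (cvg_comp _ _ h1 (@sqrt_continuous R _)).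
apply: cvg_pairR; apply: cvgM; (try exact: cvg_cst); apply: cvgD;
  apply: cvgM; (try exact: cvg_cst); (try exact: cvg_id);
  apply: cvgM; (try exact: cvg_cst); exact: hs.
Qed.

Lemma garc_props (w1 w2 r s t : R) : r = w1 ^+ 2 + w2 ^+ 2 -> 0 < r ->
  s * s = 1 -> t * t <= r ->
  circle (garc w1 w2 r s t) /\
  - w2 * (garc w1 w2 r s t).1 + w1 * (garc w1 w2 r s t).2 = t.
Proof.
move=> hr r0 ss tr; rewrite /garc /circle /=.
have rn : r != 0 by rewrite gt_eqF.
set S := Num.sqrt (r - t * t).
have SS : S ^+ 2 = r - t * t by rewrite /S sqr_sqrtr // subr_ge0.
split.
- have H : (t * - w2 + s * S * w1) ^+ 2 + (t * w1 + s * S * w2) ^+ 2 = r ^+ 2.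
    have -> : (t * - w2 + s * S * w1) ^+ 2 + (t * w1 + s * S * w2) ^+ 2 =
      (t * t + (s * s) * S ^+ 2) * (w1 ^+ 2 + w2 ^+ 2) by ring.
    by rewrite ss SS -hr; ring.
  by rewrite !expr_div_n -mulrDl H divff // expf_neq0.
- have -> : - w2 * ((t * - w2 + s * S * w1) / r) + w1 * ((t * w1 + s * S * w2) / r)
    = (t * (w1 ^+ 2 + w2 ^+ 2)) / r by ring.
  by rewrite -hr mulfK.
Qed.

Definition ssgn (y : R) : R := if 0 <= y then 1 else -1.
Lemma ssgn_sq y : ssgn y * ssgn y = 1.
Proof. by rewrite /ssgn; case: ifP => _; ring. Qed.
Lemma ssgn_abs y : ssgn y * `|y| = y.
Proof.
rewrite /ssgn; case: ifP => h; first by rewrite ger0_norm // mul1r.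
by rewrite ltr0_norm ?ltNge ?h // mulN1r opprK.
Qed.

Lemma garc_pt (w1 w2 r u v : R) : r = w1 ^+ 2 + w2 ^+ 2 ->
  0 < r -> u ^+ 2 + v ^+ 2 = 1 ->
  (- w2 * u + w1 * v) * (- w2 * u + w1 * v) <= r /\
  garc w1 w2 r (ssgn (w1 * u + w2 * v)) (- w2 * u + w1 * v) = (u, v).
Proof.
move=> hr r0 huv; set tau := - w2 * u + w1 * v.
set y := w1 * u + w2 * v.
have rn : r != 0 by rewrite gt_eqF.
have ty : tau * tau + y ^+ 2 = r.
  have -> : tau * tau + y ^+ 2 = (u ^+ 2 + v ^+ 2) * r by rewrite /tau /y hr; ring.
  by rewrite huv mul1r.
split; first by rewrite -ty lerDl sqr_ge0.
rewrite /garc.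
have -> : r - tau * tau = y ^+ 2 by rewrite -ty; ring.
rewrite sqrtr_sqr ssgn_abs; congr pair.
- have -> : tau * - w2 + y * w1 = u * r by rewrite /tau /y hr; ring.
  by rewrite mulfK.
- have -> : tau * w1 + y * w2 = v * r by rewrite /tau /y hr; ring.
  by rewrite mulfK.
Qed.


Lemma sq_bound (t R0 : R) : 0 <= R0 -> t * t <= R0 * R0 -> - R0 <= t <= R0.
Proof. by move=> h1 h2; apply/andP; split; nra. Qed.
Lemma sq_bound' (t R0 : R) : - R0 <= t -> t <= R0 -> t * t <= R0 * R0.
Proof. by move=> h1 h2; nra. Qed.

Lemma arc (b1 b2 a1 a2 : pt) : chord (b1, b2) -> circle a1 -> circle a2 ->
  0 < sd b1 b2 a1 -> 0 < sd b1 b2 a2 ->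
  exists A : set pt, [/\ connected A,
    A `<=` [set p | circle p /\ 0 < sd b1 b2 p], A a1 & A a2].
Proof.
case: b1 b2 a1 a2 => [x1 y1] [x2 y2] [u1 v1] [u2 v2] [/= h1 h2 ne] ha1 ha2 s1 s2.
have r0 := norm_pos ne.
set w1 := x2 - x1 in r0; set w2 := y2 - y1 in r0; set r := w1 ^+ 2 + w2 ^+ 2 in r0.
have hr : r = w1 ^+ 2 + w2 ^+ 2 by [].
set c := - w2 * x1 + w1 * y1.
have sdE : forall p : pt, sd (x1, y1) (x2, y2) p = - w2 * p.1 + w1 * p.2 - c.
  by move=> p; rewrite /sd /c /w1 /w2 /=; ring.
rewrite sdE /= in s1; rewrite sdE /= in s2.
have [tr1 e1] := garc_pt hr r0 ha1.
have [tr2 e2] := garc_pt hr r0 ha2.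
set tau1 := - w2 * u1 + w1 * v1 in tr1 e1 s1.
set tau2 := - w2 * u2 + w1 * v2 in tr2 e2 s2.
set sg1 := ssgn _ in e1; set sg2 := ssgn _ in e2.
set R0 := Num.sqrt r.
have R0p : 0 <= R0 by exact: sqrtr_ge0.
have hR0 : R0 * R0 = r by rewrite -expr2 sqr_sqrtr // ltW.
have /andP [tl1 tu1] : - R0 <= tau1 <= R0 by apply: sq_bound; rewrite ?hR0.
have /andP [tl2 tu2] : - R0 <= tau2 <= R0 by apply: sq_bound; rewrite ?hR0.
have gR : forall s, garc w1 w2 r s R0 = garc w1 w2 r 1 R0.
  by move=> s; rewrite /garc hR0 subrr sqrtr0 !mulr0 !mul0r.
exists (garc w1 w2 r sg1 @` `[tau1, R0]%classic `|` garc w1 w2 r sg2 @` `[tau2, R0]%classic).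
split.
- apply: connectedU.
  + exists (garc w1 w2 r sg1 R0); split; exists R0; rewrite /= ?in_itv /= ?tu1 ?tu2 ?lexx //.
    by rewrite !gR.
  + apply: connected_continuous_connected; first exact: segment_connected.
    exact/continuous_subspaceT/garc_cont.
  + apply: connected_continuous_connected; first exact: segment_connected.
    exact/continuous_subspaceT/garc_cont.
- have key : forall s tau, s * s = 1 -> - R0 <= tau -> 0 < tau - c ->
    garc w1 w2 r s @` `[tau, R0]%classic `<=` [set p | circle p /\ 0 < sd (x1, y1) (x2, y2) p].
    move=> s tau ss tl sc z [t + <-]; rewrite /= in_itv /= => /andP [lt1 lt2].
    have tt : t * t <= r by rewrite -hR0; apply: sq_bound'; [exact: le_trans tl lt1|].
    have [cz lz] := garc_props hr r0 ss tt.
    split => //; rewrite sdE lz.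
    by apply: lt_le_trans sc _; rewrite lerD2r.
  move=> z [hz|hz].
  + by apply: (key sg1 tau1) => //; exact: ssgn_sq.
  + by apply: (key sg2 tau2) => //; exact: ssgn_sq.
- by left; exists tau1 => //; rewrite /= in_itv /= lexx tu1.
- by right; exists tau2 => //; rewrite /= in_itv /= lexx tu2.
Qed.


Lemma comp_eq (C A : set pt) x y : connected A -> A `<=` C -> A x -> A y ->
  connected_component C x = connected_component C y.
Proof.
move=> cA AC Ax Ay.
have hxy : connected_component C x y by apply: (connected_component_max Ax AC cA).
apply/seteqP; split => z hz.
- exact: connected_component_trans (connected_component_sym hxy) hz.
- exact: connected_component_trans hxy hz.
Qed.

Lemma notb (b1 b2 p : pt) : sd b1 b2 p != 0 -> ~ [set b1; b2] p.
Proof. by move=> h [] e; move: h; rewrite e ?sd_b1 ?sd_b2 eqxx. Qed.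

Lemma C_sd (b1 b2 p : pt) : chord (b1, b2) -> (@circle R `\` [set b1; b2]) p ->
  sd b1 b2 p != 0.
Proof.
move=> cb [cp nb]; apply/eqP => h; apply: nb.
by case: (sd_zero cb cp h) => e; [left|right].
Qed.

Lemma cross_easy (al be : pt * pt) : chord be -> circle al.1 -> circle al.2 ->
  crsv al be < 0 -> cross al be.
Proof.
case: al be => [a1 a2] [b1 b2] cb /= ca1 ca2; rewrite /crsv /= => hs.
have nz1 : sd b1 b2 a1 != 0 by apply/eqP => e; move: hs; rewrite e mul0r ltxx.
have nz2 : sd b1 b2 a2 != 0 by apply/eqP => e; move: hs; rewrite e mulr0 ltxx.
rewrite /cross /=; split; [by split => //; exact: notb | by split => //; exact: notb |].
move=> E.
have h12 : connected_component (@circle R `\` [set b1; b2]) a1 a2.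
  by rewrite E; apply: connected_component_refl; split => //; exact: notb.
have Ka1 : connected_component (@circle R `\` [set b1; b2]) a1 a1.
  by apply: connected_component_refl; split => //; exact: notb.
set CC := @circle R `\` [set b1; b2] in E h12 Ka1 *.
have cK : connected (connected_component CC a1) by exact: component_connected.
have sK : connected_component CC a1 `<=` CC by exact: connected_component_sub.
have [p1|n1] := ltP 0 (sd b1 b2 a1).
- have := conn_sign (@sd_cont b1 b2) cK (fun z Kz => C_sd cb (sK _ Kz)) Ka1 h12 p1.
  by move=> p2; move: hs; rewrite ltNge mulr_ge0 // ltW.
- have n1' : sd b1 b2 a1 < 0 by rewrite lt_neqAle nz1.
  have nz : forall z, connected_component CC a1 z -> sd b2 b1 z != 0.
    by move=> z Kz; rewrite sd_swap oppr_eq0; exact: C_sd cb (sK _ Kz).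
  have := conn_sign (@sd_cont b2 b1) cK nz Ka1 h12.
  rewrite !(sd_swap b1 b2) !oppr_gt0 => /(_ n1') n2.
  by move: hs; rewrite ltNge ltW // nmulr_rgt0.
Qed.


Lemma chord_swap (a b : pt) : chord (a, b) -> chord (b, a).
Proof. by case=> /= h1 h2 ne; split => //; apply: nesym. Qed.

Lemma cross_hard (al be : pt * pt) : chord be -> cross al be ->
  [/\ circle al.1, circle al.2 & crsv al be < 0].
Proof.
case: al be => [a1 a2] [b1 b2] cb; rewrite /cross /crsv /=.
set CC := @circle R `\` [set b1; b2].
move=> [C1 C2 ne].
have nz1 := C_sd cb C1; have nz2 := C_sd cb C2.
have [ca1 _] := C1; have [ca2 _] := C2.
split => //.
rewrite ltNge; apply/negP => hp; apply: ne.
have [p1|n1] := ltP 0 (sd b1 b2 a1).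
- have p2 : 0 < sd b1 b2 a2.
    rewrite lt_neqAle eq_sym nz2 /=.
    by move: hp; rewrite pmulr_rge0.
  have [A [cA AS A1 A2]] := arc cb ca1 ca2 p1 p2.
  apply: (comp_eq cA) A1 A2 => z /AS [cz sz]; split => //.
  by apply: notb; rewrite gt_eqF.
- have n1' : sd b1 b2 a1 < 0 by rewrite lt_neqAle nz1.
  have n2 : sd b1 b2 a2 < 0.
    rewrite lt_neqAle nz2 /=.
    by move: hp; rewrite nmulr_rge0.
  have cb' := chord_swap cb.
  have q1 : 0 < sd b2 b1 a1 by rewrite (sd_swap b1 b2) oppr_gt0.
  have q2 : 0 < sd b2 b1 a2 by rewrite (sd_swap b1 b2) oppr_gt0.
  have [A [cA AS A1 A2]] := arc cb' ca1 ca2 q1 q2.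
  apply: (comp_eq cA) A1 A2 => z /AS [cz sz]; split => //.
  by apply: notb; move: sz; rewrite (sd_swap b1 b2) oppr_gt0 => sz; rewrite lt_eqF.
Qed.


Lemma approx (L : set (pt * pt)) (u v : nat -> pt * pt) al be :
  prelamination L -> (forall n, L (u n)) -> (forall n, L (v n)) ->
  u @ \oo --> al -> v @ \oo --> be -> crsv al be < 0 -> False.
Proof.
move=> [_ hL nc] Lu Lv cu cv hs.
have ev : \forall t \near \oo, crsv (u t) (v t) < 0.
  by apply: (@cvgr_lt _ _ _ _ _ (crsv al be)) => //; apply: cvg_crsv.
have [n hn] := filter_ex ev.
have chord_of : forall x, L x -> chord x by case=> a b /hL.
have [c1 c2 _] := chord_of _ (Lu n).
apply: (nc _ _ (Lu n) (Lv n)); apply: cross_easy => //.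
exact: chord_of.
Qed.

Lemma side_pt (x1 x2 : pt) : chord (x1, x2) -> exists c, circle c /\ 0 < sd x1 x2 c.
Proof.
case: x1 x2 => [p1 q1] [p2 q2] [/= h1 h2 ne].
move: h1 h2; rewrite /circle /= => h1 h2.
have r0 := norm_pos ne.
set r := _ + _ in r0.
set R0 := Num.sqrt r.
have R0p : 0 < R0 by rewrite sqrtr_gt0.
have hR0 : R0 * R0 = r by rewrite -expr2 sqr_sqrtr // ltW.
have R0n : R0 != 0 by rewrite gt_eqF.
exists (- (q2 - q1) / R0, (p2 - p1) / R0); split.
- rewrite /circle /= !expr_div_n -mulrDl sqrrN addrC -/r -hR0 -expr2 divff //.
  by rewrite expf_neq0.
- rewrite /sd /=.
  set k := - q2 * p1 + p2 * q1.
  set d := p1 * p2 + q1 * q2.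
  have hk : k * k = 1 - d * d.
    have -> : k * k = (p1 ^+ 2 + q1 ^+ 2) * (p2 ^+ 2 + q2 ^+ 2) - d * d
      by rewrite /k /d; ring.
    by rewrite h1 h2 mul1r.
  have hr : r = 2 - 2 * d.
    have -> : r = (p1 ^+ 2 + q1 ^+ 2) + (p2 ^+ 2 + q2 ^+ 2) - 2 * d
      by rewrite /r /d; ring.
    by rewrite h1 h2.
  have -> : (p2 - p1) * ((p2 - p1) / R0 - q1) - (q2 - q1) * (- (q2 - q1) / R0 - p1)
      = r / R0 - k by rewrite /r /k; field.
  rewrite -hR0 mulfK //.
  have d1 : d < 1 by lra.
  rewrite subr_gt0 ltNge; apply/negP => hk2.
  have : R0 * R0 <= k * k by apply: ler_pM => //; exact: ltW.
  rewrite hR0 hk hr => h.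
  have : 0 < (1 - d) ^+ 2 by rewrite expr2 mulr_gt0 // subr_gt0.
  by nra.
Qed.


Lemma side_leaf (L : set (pt * pt)) (x1 x2 : pt) :
  @circle R `<=` closure (endpoints L) -> chord (x1, x2) ->
  exists l, L l /\ 0 < sd x1 x2 l.1.
Proof.
move=> dense cx.
have [c [cc sc]] := side_pt cx.
have nb : nbhs c [set p | 0 < sd x1 x2 p].
  exact: (@cvgr_gt _ _ _ _ _ (sd x1 x2 c)) (@sd_cont x1 x2 c) _ sc.
have [p [[q Lpq] sp]] := dense c cc _ nb.
by exists (p, q).
Qed.

Lemma discrete (P : nat -> Prop) k : P 0 -> ~ P k ->
  exists i, (i < k)%N /\ P i /\ ~ P i.+1.
Proof.
elim: k => [|k IH] P0 Pk; first by [].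
have [Pk'|nPk'] := pselect (P k).
- by exists k.
- by have [i [ik [Pi nPi]]] := IH P0 nPk'; exists i; split => //; rewrite ltnS ltnW.
Qed.

Lemma same_leaf_cases (y l : pt * pt) : same_leaf y l -> y.1 = l.1 /\ y.2 = l.2 \/ y.1 = l.2 /\ y.2 = l.1.
Proof. by case=> ->; [left|right]. Qed.

Lemma exists_cross (Lp Lm : set (pt * pt)) (x : pt * pt) :
  prelamination Lp -> prelamination Lm -> fully_transverse Lp Lm -> chord x ->
  exists l, (Lp `|` Lm) l /\ crsv l x < 0.
Proof.
case: x => x1 x2 [_ hLp _] [_ hLm _] [_ dense chain] cx.
have chord_of : forall l, (Lp `|` Lm) l -> chord l.
  by case=> a b [/hLp|/hLm].
have [//|H] := pselect (exists l, (Lp `|` Lm) l /\ crsv l (x1, x2) < 0).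
exfalso.
have nn : forall l, (Lp `|` Lm) l -> 0 <= crsv l (x1, x2).
  move=> l Ll; rewrite leNgt; apply/negP => h; apply: H; by exists l.
have [l1 [L1 s1]] := side_leaf dense cx.
have [l2 [L2 s2]] := side_leaf dense (chord_swap cx).
rewrite (sd_swap x1 x2) oppr_gt0 in s2.
have [k [f [f0 fk fin fcr]]] := chain _ _ L1 L2.
pose P i := 0 < sd x1 x2 (f i).1 \/ 0 < sd x1 x2 (f i).2.
have P0 : P 0%N.
  by rewrite /P; case: (same_leaf_cases f0) => [[-> _]|[_ ->]]; [left|right].
have nPk : ~ P k.
  have := nn _ (fin _ (leqnn k)); rewrite /crsv /= => hk.
  rewrite /P; case: (same_leaf_cases fk) => [[e1 e2]|[e1 e2]].
  - rewrite e1 in hk *; move=> [] h; [by move: h; rewrite ltNge ltW|].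
    by move: hk; rewrite leNgt nmulr_rlt0 // h.
  - rewrite e2 in hk *; move=> [] h; [|by move: h; rewrite ltNge ltW].
    by move: hk; rewrite leNgt nmulr_llt0 // h.
have [i [ik [Pi nPi]]] := discrete P0 nPk.
have La := fin i (ltnW ik); have Lb := fin i.+1 ik.
have cr := fcr i ik.
have [ca1 ca2 _] := chord_of _ La.
have cb := chord_of _ Lb.
have [_ _ hab] := cross_hard cb cr.
move: ca1 ca2 cb hab Pi nPi (nn _ La) (nn _ Lb); rewrite /P /crsv /=.
case: (f i) => a1 a2; case: (f i.+1) => b1 b2 /= ca1 ca2 cb hab Pi nPi na nb.
have [l [t [/andP [l0 lt1] /andP [t0 t1] e1 e2]]] := inter ca1 ca2 cb hab.
have E := sd_aff x1 x2 a1 a2 l.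
have E' := sd_aff x1 x2 b1 b2 t.
rewrite e1 e2 -E' in E.
have [nb1 nb2] : sd x1 x2 b1 <= 0 /\ sd x1 x2 b2 <= 0.
  by split; rewrite leNgt; apply/negP => h; apply: nPi; [left|right].
have rhs : (1 - t) * sd x1 x2 b1 + t * sd x1 x2 b2 <= 0.
  have h1 : (1 - t) * sd x1 x2 b1 <= 0 by rewrite mulr_ge0_le0 // subr_ge0 ltW.
  have h2 : t * sd x1 x2 b2 <= 0 by rewrite mulr_ge0_le0 // ltW.
  lra.
have lhs : 0 < (1 - l) * sd x1 x2 a1 + l * sd x1 x2 a2.
  case: Pi => h.
  - have h2 : 0 <= sd x1 x2 a2 by move: na; rewrite pmulr_rge0.
    have h1 : 0 < (1 - l) * sd x1 x2 a1 by rewrite mulr_gt0 // subr_gt0.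
    have h3 : 0 <= l * sd x1 x2 a2 by rewrite mulr_ge0 // ltW.
    lra.
  - have h2 : 0 <= sd x1 x2 a1 by move: na; rewrite pmulr_lge0.
    have h1 : 0 <= (1 - l) * sd x1 x2 a1 by rewrite mulr_ge0 // subr_ge0 ltW.
    have h3 : 0 < l * sd x1 x2 a2 by rewrite mulr_gt0.
    lra.
lra.
Qed.


Lemma crsv_same1 (y l be : pt * pt) : same_leaf y l -> crsv y be = crsv l be.
Proof. by case=> ->; rewrite /crsv //= mulrC. Qed.
Lemma crsv_same2 (al y l : pt * pt) : same_leaf y l -> crsv al y = crsv al l.
Proof. by case=> ->; rewrite /crsv //= !(sd_swap l.1 l.2) mulrNN. Qed.

Lemma crsv_sym (al be : pt * pt) : chord al -> chord be -> crsv al be < 0 -> crsv be al < 0.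
Proof. by case: al be => [a1 a2] [b1 b2]; rewrite /crsv /=; exact: crs_sym. Qed.

End Aux.

Unset Implicit Arguments.
Local Close Scope ring_scope.

Theorem lemma3p15 (R : realType) (Lp Lm Lhp Lhm : set (plane R * plane R)) :
  prelamination Lp -> prelamination Lm -> fully_transverse Lp Lm ->
  upairs Lhp -> upairs Lhm ->
  Lp `<=` Lhp -> Lhp `<=` Lbar Lp ->
  Lm `<=` Lhm -> Lhm `<=` Lbar Lm ->
  prelamination Lhp /\ prelamination Lhm /\ fully_transverse Lhp Lhm.
Proof.
move=> pLp pLm ft uHp uHm sp bp sm bm.
have chordbar : forall (L : set (plane R * plane R)) x, Lbar L x -> chord x.
  by move=> L [a b] /= [c1 c2 ne _]; split.

have prelam_h : forall L Lh : set (plane R * plane R), prelamination L -> upairs Lh -> Lh `<=` Lbar L ->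
    prelamination Lh.
  move=> L Lh pL uh hb; split => //.
  - by move=> a b /hb /= [c1 c2 ne _]; split.
  - move=> al be /hb /= [c1 c2 ne [u [Lu cu]]] /hb /= [d1 d2 ne' [v [Lv cv]]] cr.
    have cbe : chord be by split.
    have [_ _ hs] := cross_hard cbe cr.
    exact: approx pL Lu Lv cu cv hs.
split; first exact: prelam_h pLp uHp bp.
split; first exact: prelam_h pLm uHm bm.
have [disj dense chain] := ft.
have chord_of : forall l, (Lp `|` Lm) l -> chord l.
  have [_ hLp _] := pLp; have [_ hLm _] := pLm.
  by case=> a b [/hLp|/hLm].
have chord_h : forall l, (Lhp `|` Lhm) l -> chord l.
  by move=> l [/bp|/bm] /chordbar.
have sub : forall l, (Lp `|` Lm) l -> (Lhp `|` Lhm) l.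
  by move=> l [h|h]; [left; exact: sp|right; exact: sm].
split.
- rewrite -subset0 => x [hx1 hx2].
  have /= [c1 c2 ne [v [Lv cv]]] := bp _ hx1.
  have /= [_ _ _ [w [Lw cw]]] := bm _ hx2.
  have cx : chord x by split.
  have [l [Ll hl]] := exists_cross pLp pLm ft cx.
  case: Ll => Ll.
  + by apply: (approx (u := fun _ => l) pLp _ Lv _ cv hl) => //; exact: cvg_cst.
  + by apply: (approx (u := fun _ => l) pLm _ Lw _ cw hl) => //; exact: cvg_cst.
- apply: subset_trans dense _; apply: closureS => p [q hq]; exists q.
  exact: sub.
- move=> al be hal hbe.
  have cal := chord_h _ hal; have cbe := chord_h _ hbe.
  have [l1 [L1 h1]] := exists_cross pLp pLm ft cal.
  have h1' := crsv_sym (chord_of _ L1) cal h1.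
  have [l2 [L2 h2]] := exists_cross pLp pLm ft cbe.
  have [k [g [g0 gk gin gcr]]] := chain _ _ L1 L2.
  exists k.+2, (fun n => if n == 0%N then al else if n == k.+2 then be else g n.-1).
  split.
  + by left.
  + by rewrite /= eqxx; left.
  + case=> [|i] hi /=; first exact: hal.
    case: eqP => [_|ne]; first exact: hbe.
    apply: sub; apply: gin.
    by move: hi ne; rewrite !ltnS leq_eqVlt => /orP [/eqP ->|].
  + case=> [|j] hj /=.
    * have cg := chord_of _ (gin 0%N (leq0n k)).
      have [ca1 ca2 _] := cal.
      apply: cross_easy => //.
      by rewrite (crsv_same2 _ g0).
    * have jk : (j <= k)%N by rewrite -ltnS.
      rewrite (_ : (j.+1 == k.+2) = false); last by rewrite eqSS; apply/negbTE; rewrite neq_ltn ltnS jk.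
      case: eqP => [e|ne].
      - have j_eq : j = k by case: e.
        rewrite j_eq.
        have [cg1 cg2 _] := chord_of _ (gin k (leqnn k)).
        apply: cross_easy => //.
        by rewrite (crsv_same1 _ gk).
      - apply: gcr.
        rewrite ltn_neqAle jk andbT; apply/eqP => e; apply: ne; by rewrite e.
Qed.
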